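(* Let $\lambda$ be a partition with $d$ distinct part sizes and $\lambda'$ its conjugate. For $r,s\in\{0,\dots,d\}$, \[ p_{r,s}[\lambda](t,q)=p^{\rm col}_{d+1-r,\,d-s}[\lambda'](q,t),\qquad \overline{p}_{r,s}[\lambda](t,q)=\overline{p}^{\rm col}_{d+1-r,\,d-s}[\lambda'](q,t), \] where the first subscript is read modulo $d+1$ (so $p^{\rm col}_{d+1,s}[\lambda']=p^{\rm col}_{0,s}[\lambda']$), and $f(t,q)$ denotes $f$ with $q$ and $t$ interchanged.
   Context: Partitions are Young diagrams in French convention (cells $(x,y)\in\mathbb{Z}_{>0}^2$, $x\le\lambda_y$), $\lambda'$ the conjugate; for $c=(x,y)\in\lambda$, $a_\lambda(c)=\lambda_y-x$, $\ell_\lambda(c)=\lambda'_x-y$; $n(\kappa)=\sum_{c\in\kappa}\ell_\kappa(c)$, $n'(\kappa)=\sum_{c\in\kappa}a_\kappa(c)$, $n(\rho/\kappa)=n(\rho)-n(\kappa)$, $n'(\rho/\kappa)=n'(\rho)-n'(\kappa)$. For $\kappa\subseteq\rho$, $\mathcal{R}_{\rho/\kappa}$ (resp. $\mathcal{C}_{\rho/\kappa}$): cells of $\kappa$ in a row (resp. column) containing a cell of $\rho/\kappa$. $[i,j]=1-q^it^j$. For $\kappa\lessdot\rho$ (one-cell difference): $\alpha_{\rho/\kappa}=\prod_{c\in\mathcal{R}_{\rho/\kappa}}\frac{[a_\kappa(c),\ell_\kappa(c)+1]}{[a_\rho(c),\ell_\rho(c)+1]}\prod_{c\in\mathcal{C}_{\rho/\kappa}}\frac{[a_\kappa(c)+1,\ell_\kappa(c)]}{[a_\rho(c)+1,\ell_\rho(c)]}$,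 $\overline{\alpha}_{\rho/\kappa}=\prod_{c\in\mathcal{R}_{\rho/\kappa}}\frac{[a_\kappa(c)+1,\ell_\kappa(c)]}{[a_\rho(c)+1,\ell_\rho(c)]}\prod_{c\in\mathcal{C}_{\rho/\kappa}}\frac{[a_\kappa(c),\ell_\kappa(c)+1]}{[a_\rho(c),\ell_\rho(c)+1]}$, $\beta=1/\alpha$, $\overline{\beta}=1/\overline{\alpha}$. For $\mu\lessdot\lambda\lessdot\nu$, with $A=n'(\lambda/\mu)-n'(\nu/\lambda)$, $B=n(\nu/\lambda)-n(\lambda/\mu)$: $\gamma_{\nu/\lambda/\mu}=\frac{(1-q^At^B)(1-q^{A+1}t^{B-1})}{(1-q)(1-t)}$. Probabilities: $\mathcal{P}_\lambda(\lambda\rightarrow\nu)=t^{n(\nu/\lambda)}\alpha_{\nu/\lambda}$, $\overline{\mathcal{P}}_\lambda(\lambda\leftarrow\nu)=t^{n(\nu/\lambda)}\overline{\alpha}_{\nu/\lambda}$, for $\mu\lessdot\lambda$: $\mathcal{P}_\lambda(\mu\rightarrow\nu)=t^{B-1}\alpha_{\nu/\lambda}\beta_{\lambda/\mu}/\gamma_{\nu/\lambda/\mu}$, $\overline{\mathcal{P}}_\lambda(\mu\leftarrow\nu)=t^{B-1}\overline{\alpha}_{\nu/\lambda}\overline{\beta}_{\lambda/\mu}/\gamma_{\nu/\lambda/\mu}$. If $\lambda$ has distinct part sizes $u_1>\dots>u_d>0$ with $v_i$ the multiplicity of $u_i$, set $v_{1,s}=v_1+\dots+v_s$; for $0\le s\le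 d$, $\lambda^{(+s)}$ is obtained by adding a cell in row $v_{1,s}+1$; $\lambda^{(-0)}=\lambda$, and for $1\le r\le d$, $\lambda^{(-r)}$ is obtained by removing a cell from row $v_{1,r}$. $p_{r,s}[\lambda](q,t)=\mathcal{P}_\lambda(\lambda^{(-r)}\rightarrow\lambda^{(+s)})$, $\overline{p}_{r,s}[\lambda](q,t)=\overline{\mathcal{P}}_\lambda(\lambda^{(-r)}\leftarrow\lambda^{(+s)})$, and $p^{\rm col}_{r,s}[\lambda](q,t)=p_{r,s}[\lambda](q^{-1},t^{-1})$, $\overline{p}^{\rm col}_{r,s}[\lambda](q,t)=\overline{p}_{r,s}[\lambda](q^{-1},t^{-1})$. *)

(* Defs.v *)
From mathcomp Require Import all_boot all_order all_algebra fraction.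
Set Implicit Arguments. Unset Strict Implicit. Unset Printing Implicit Defensive.
Import Order.TTheory GRing.Theory Num.Theory.
Local Open Scope ring_scope.

(* A partition is a weakly decreasing list of positive parts (rows, bottom to
   top in French convention): lambda_y = nth 0 l (y-1), rows indexed from 1. *)
Definition is_partition (l : seq nat) : bool :=
  sorted geq l && all (fun p => 0 < p)%N l.

Definition part (l : seq nat) (y : nat) : nat := nth 0%N l y.-1.
Definition conjp (l : seq nat) (x : nat) : nat := count (fun p => x <= p)%N l.
Definition conj_part (l : seq nat) : seq nat :=
  mkseq (fun i => conjp l i.+1) (head 0%N l).

(* cells (x,y), x = column, y = row, both >= 1 *)
Definition cells (l : seq nat) : seq (nat * nat) :=
  flatten [seq [seq (x.+1, y.+1) | x <- iota 0 (nth 0%N l y)] | y <- iota 0 (size l)].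

Definition arm (l : seq nat) (c : nat * nat) : int :=
  (part l c.2)%:Z - (c.1)%:Z.
Definition leg (l : seq nat) (c : nat * nat) : int :=
  (conjp l c.1)%:Z - (c.2)%:Z.

Definition nleg (l : seq nat) : int := \sum_(c <- cells l) leg l c.
Definition narm (l : seq nat) : int := \sum_(c <- cells l) arm l c.

Definition skew (rho kappa : seq nat) : seq (nat * nat) :=
  [seq c <- cells rho | c \notin cells kappa].
Definition Rset (rho kappa : seq nat) : seq (nat * nat) :=
  [seq c <- cells kappa | has (fun e => e.2 == c.2) (skew rho kappa)].
Definition Cset (rho kappa : seq nat) : seq (nat * nat) :=
  [seq c <- cells kappa | has (fun e => e.1 == c.1) (skew rho kappa)].

Section Probabilities.
Variables (F : fieldType) (q t : F).

Definition br (i j : int) : F := 1 - q ^ i * t ^ j.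

Definition alpha (rho kappa : seq nat) : F :=
  (\prod_(c <- Rset rho kappa)
     (br (arm kappa c) (leg kappa c + 1) / br (arm rho c) (leg rho c + 1))) *
  (\prod_(c <- Cset rho kappa)
     (br (arm kappa c + 1) (leg kappa c) / br (arm rho c + 1) (leg rho c))).

Definition alphabar (rho kappa : seq nat) : F :=
  (\prod_(c <- Rset rho kappa)
     (br (arm kappa c + 1) (leg kappa c) / br (arm rho c + 1) (leg rho c))) *
  (\prod_(c <- Cset rho kappa)
     (br (arm kappa c) (leg kappa c + 1) / br (arm rho c) (leg rho c + 1))).

Definition beta (rho kappa : seq nat) : F := (alpha rho kappa)^-1.
Definition betabar (rho kappa : seq nat) : F := (alphabar rho kappa)^-1.

Definition Aexp (nu lam mu : seq nat) : int :=
  (narm lam - narm mu) - (narm nu - narm lam).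
Definition Bexp (nu lam mu : seq nat) : int :=
  (nleg nu - nleg lam) - (nleg lam - nleg mu).

Definition gamma (nu lam mu : seq nat) : F :=
  let A := Aexp nu lam mu in let B := Bexp nu lam mu in
  ((1 - q ^ A * t ^ B) * (1 - q ^ (A + 1) * t ^ (B - 1))) / ((1 - q) * (1 - t)).

Definition P0 (lam nu : seq nat) : F := t ^ (nleg nu - nleg lam) * alpha nu lam.
Definition Pbar0 (lam nu : seq nat) : F :=
  t ^ (nleg nu - nleg lam) * alphabar nu lam.
(* P_lam(mu -> nu) and Pbar_lam(mu <- nu), mu <. lam *)
Definition P1 (lam mu nu : seq nat) : F :=
  t ^ (Bexp nu lam mu - 1) * alpha nu lam * beta lam mu / gamma nu lam mu.
Definition Pbar1 (lam mu nu : seq nat) : F :=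
  t ^ (Bexp nu lam mu - 1) * alphabar nu lam * betabar lam mu / gamma nu lam mu.

End Probabilities.

Definition dparts (l : seq nat) : seq nat := undup l.
Definition ndist (l : seq nat) : nat := size (dparts l).
(* v_{1,s} = v_1 + ... + v_s (= 0 for s = 0) *)
Definition vsum (l : seq nat) (s : nat) : nat :=
  if s is 0 then 0%N else count (fun p => nth 0%N (dparts l) s.-1 <= p)%N l.

(* add a cell in row k (k >= 1) / remove a cell from row k (dropping a zero part) *)
Definition add_cell (l : seq nat) (k : nat) : seq nat := incr_nth l k.-1.
Definition rem_cell (l : seq nat) (k : nat) : seq nat :=
  [seq p <- set_nth 0%N l k.-1 (nth 0%N l k.-1).-1 | (0 < p)%N].

Definition lplus (l : seq nat) (s : nat) : seq nat := add_cell l (vsum l s).+1.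
Definition lminus (l : seq nat) (r : nat) : seq nat :=
  if r is 0 then l else rem_cell l (vsum l r).

Definition prs (F : fieldType) (q t : F) (l : seq nat) (r s : nat) : F :=
  if r is 0 then P0 q t l (lplus l s)
  else P1 q t l (lminus l r) (lplus l s).
Definition pbarrs (F : fieldType) (q t : F) (l : seq nat) (r s : nat) : F :=
  if r is 0 then Pbar0 q t l (lplus l s)
  else Pbar1 q t l (lminus l r) (lplus l s).

Definition pcol (F : fieldType) (q t : F) (l : seq nat) (r s : nat) : F :=
  prs q^-1 t^-1 l r s.
Definition pbarcol (F : fieldType) (q t : F) (l : seq nat) (r s : nat) : F :=
  pbarrs q^-1 t^-1 l r s.

Definition QT : fieldType := {fraction {poly {poly rat}}}.
Definition qv : QT := tofrac ((('X : {poly rat}))%:P).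
Definition tv : QT := tofrac ('X : {poly {poly rat}}).

(* Main.v *)
Require Import Defs.
From mathcomp Require Import all_boot all_order all_algebra fraction.
From mathcomp Require Import zify ring.

Module MA.
Set Implicit Arguments. Unset Strict Implicit. Unset Printing Implicit Defensive.
Import Order.TTheory GRing.Theory Num.Theory.

Lemma geq_trans : transitive geq.
Proof. by move=> a b c /= h1 h2; apply: leq_trans h2 h1. Qed.

Lemma part_cons a l y : part (a :: l) y.+2 = part l y.+1.
Proof. by []. Qed.

Lemma part_le_head l y : is_partition l -> part l y <= head 0 l.
Proof.
case: l => [|a l]; first by rewrite /part nth_nil.
move=> /andP[] /= H _.
have := order_path_min geq_trans H => /allP Ha.
case: y => [|[|y]] //=.
rewrite /part /=; case: (ltnP y (size l)) => hy.
  exact: Ha (mem_nth 0 hy).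
by rewrite nth_default.
Qed.

Lemma partK l x y : is_partition l -> 0 < x -> 0 < y ->
  (x <= part l y) = (y <= conjp l x).
Proof.
elim: l y => [|a l IH] y Hp hx hy.
  by rewrite /part /conjp /= nth_nil leqNgt hx leqNgt hy.
move: Hp => /andP[Hs /andP[Ha Hl]].
have Hp0 : is_partition l by apply/andP; split; [exact: path_sorted Hs|exact: Hl].
have := order_path_min geq_trans Hs => /allP Hm.
rewrite /conjp /=.
case: (leqP x a) => hxa.
  case: y hy => [//|[|y]] _ //=.
  by rewrite -[part _ _]/(part l y.+1) IH // add1n ltnS.
have c0 : count (fun p => x <= p) l = 0.
  apply/eqP; rewrite -leqn0 leqNgt -has_count; apply/hasP => -[p Hp Hxp].
  by have := Hm p Hp => /= hp; move: (leq_trans Hxp hp); rewrite leqNgt hxa.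
rewrite [count _ _]c0 addn0.
case: y hy => [//|[|y]] _ //=; first by rewrite leqNgt hxa.
rewrite /part /=; case: (ltnP y (size l)) => hy.
  by have := Hm _ (mem_nth 0 hy) => /= hp; apply/negbTE; rewrite -ltnNge; apply: leq_ltn_trans hp hxa.
by rewrite nth_default // leqNgt hx.
Qed.

Lemma eq_by_le a b : (forall x, 0 < x -> (x <= a) = (x <= b)) -> a = b.
Proof.
move=> H; apply/eqP; rewrite eqn_leq; apply/andP; split.
  case: a H => // a H; by rewrite -H.
case: b H => // b H; by rewrite H.
Qed.

Lemma part_anti l y y' : is_partition l -> 0 < y -> y <= y' -> part l y' <= part l y.
Proof.
move=> /andP[Hs _] hy hyy; rewrite /part.
case: (ltnP y'.-1 (size l)) => h; last by rewrite (nth_default _ h).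
have := sorted_leq_nth geq_trans (fun x => leqnn x) 0 Hs.
apply; rewrite ?inE //; first by apply: leq_ltn_trans h; rewrite -!subn1 leq_sub2r.
by rewrite -!subn1 leq_sub2r.
Qed.

Lemma conjp_gt_head l x : is_partition l -> head 0 l < x -> conjp l x = 0.
Proof.
move=> Hp hx; apply/eqP; rewrite -leqn0 leqNgt -has_count; apply/hasP => -[p /(nthP 0) [i Hi <-] Hxp].
have := part_le_head i.+1 Hp; rewrite /part /= => h.
by move: (leq_trans Hxp h); rewrite leqNgt hx.
Qed.

Lemma mem_cells l c : (c \in cells l) = [&& 0 < c.1, c.1 <= part l c.2 & 0 < c.2].
Proof.
case: c => x1 y1 /=; apply/idP/idP.
  move=> /flatten_mapP[y]; rewrite mem_iota add0n => hy /mapP[x]; rewrite mem_iota add0n => hx [-> ->].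
  by rewrite /part /= andbT; case/andP: hx.
case/and3P; case: x1 => // x; case: y1 => // y _ hx _.
have hy : y < size l.
  by rewrite ltnNge; apply/negP => h; move: hx; rewrite /part /= nth_default.
apply/flatten_mapP; exists y; first by rewrite mem_iota.
by apply/mapP; exists x; rewrite // mem_iota.
Qed.

Lemma flatten_uniq (S T : eqType) (F : S -> seq T) (s : seq S) :
  uniq s -> (forall y, uniq (F y)) ->
  (forall y y' c, c \in F y -> c \in F y' -> y = y') ->
  uniq (flatten [seq F y | y <- s]).
Proof.
move=> Hs HF Hd; elim: s Hs => [|a s IH] //= /andP[Ha Hs].
rewrite cat_uniq HF IH // andbT; apply/hasP => -[c /flatten_mapP[y Hy Hc] Hc'].
by move: Ha; rewrite (Hd _ _ _ Hc' Hc) Hy.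
Qed.

Lemma cells_uniq l : uniq (cells l).
Proof.
apply: flatten_uniq; first exact: iota_uniq.
  move=> y; rewrite map_inj_uniq ?iota_uniq //; by move=> a b [].
by move=> y y' c /mapP[x _ ->] /mapP[x' _ [_ H]].
Qed.

Definition swap (c : nat * nat) := (c.2, c.1).
Lemma swapK : involutive swap. Proof. by case. Qed.
Lemma swap_inj : injective swap. Proof. exact: inv_inj swapK. Qed.

Lemma conj_partition l : is_partition l -> is_partition (conj_part l).
Proof.
move=> Hp; apply/andP; split.
  rewrite /conj_part /mkseq; apply: (@homo_sorted _ _ _ leq); last exact: iota_sorted.
  by move=> i j hij /=; apply: sub_count => p /= h; apply: leq_trans h.
rewrite /conj_part /mkseq all_map; apply/allP => i; rewrite mem_iota add0n /= => hi.
rewrite /conjp -has_count; apply/hasP; exists (head 0 l) => //.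
by case: l Hp hi => //= a l _ _; rewrite mem_head.
Qed.

Lemma part_conj l x : is_partition l -> 0 < x -> part (conj_part l) x = conjp l x.
Proof.
move=> Hp hx; rewrite /part /conj_part.
case: (ltnP x.-1 (head 0 l)) => h; first by rewrite nth_mkseq // prednK.
rewrite nth_default ?size_mkseq // conjp_gt_head //.
by case: x hx h.
Qed.

Lemma conjp_conj l y : is_partition l -> 0 < y -> conjp (conj_part l) y = part l y.
Proof.
move=> Hp hy; apply: eq_by_le => x hx.
by rewrite -partK ?conj_partition // part_conj // -partK.
Qed.

Lemma size_conjp1 l : is_partition l -> size l = conjp l 1.
Proof.
move=> /andP[_ Ha]; rewrite -(count_predT l) /conjp; apply: eq_in_count => p /=.
by move/(allP Ha).
Qed.

Lemma part_inj a b : is_partition a -> is_partition b ->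
  (forall y, 0 < y -> part a y = part b y) -> a = b.
Proof.
move=> Ha Hb H.
have Hs : size a = size b.
  rewrite !size_conjp1 //; apply: eq_by_le => y hy.
  by rewrite -!partK // H.
apply: (eq_from_nth (x0 := 0)) => // i _.
exact: (H i.+1).
Qed.

Lemma cells_conj l : is_partition l -> perm_eq (cells (conj_part l)) (map swap (cells l)).
Proof.
move=> Hp; apply: uniq_perm; rewrite ?cells_uniq ?map_inj_uniq ?cells_uniq //; first exact: swap_inj.
case=> x y; rewrite -[(x, y)]/(swap (y, x)) mem_map; last exact: swap_inj.
rewrite !mem_cells /=.
case hx: (0 < x); case hy: (0 < y) => //=; rewrite ?andbF //.
by rewrite part_conj // -partK.
Qed.

End MA.
Import MA.

Module MB.
Set Implicit Arguments. Unset Strict Implicit. Unset Printing Implicit Defensive.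
Import Order.TTheory GRing.Theory Num.Theory.

Record OC (k r : seq nat) (e : nat * nat) : Prop := MkOC {
  OCk : is_partition k; OCr : is_partition r;
  OCp : forall y, 0 < y -> part r y = part k y + (y == e.2);
  OCc : forall x, 0 < x -> conjp r x = conjp k x + (x == e.1);
  OC1 : e.1 = (part k e.2).+1; OC2 : e.2 = (conjp k e.1).+1 }.

Lemma OC_of_parts k r y0 : is_partition k -> is_partition r -> 0 < y0 ->
  (forall y, 0 < y -> part r y = part k y + (y == y0)) ->
  OC k r ((part k y0).+1, y0).
Proof.
move=> Hk Hr hy0 H.
set e1 := (part k y0).+1.
have Hlt : forall y, 0 < y -> y < y0 -> e1 <= part k y.
  move=> y hy hyy; have := part_anti Hr hy (ltnW hyy).
  by rewrite !H // eqxx (_ : (y == y0) = false) ?addn0 ?addn1 //; apply/negbTE; rewrite neq_ltn hyy.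
have Hge : forall y, y0 <= y -> part k y < e1.
  by move=> y hy; rewrite ltnS; apply: part_anti.
have Hc : conjp k e1 = y0.-1.
  apply: eq_by_le => y hy; rewrite -partK //.
  case: (ltnP y y0) => hyy.
    by rewrite Hlt //; symmetry; apply/idP; lia.
  by rewrite leqNgt Hge //; symmetry; apply/negbTE; lia.
split => //=; last by rewrite Hc prednK.

move=> x hx; apply: eq_by_le => y hy; rewrite -partK // H //.
case: (eqVneq x e1) => [->|hxe].
  rewrite Hc addn1 prednK //.
  case: (ltngtP y y0) => hyy.
  - by rewrite addn0 Hlt.
  - by rewrite addn0 leqNgt Hge // ltnW.
  - by rewrite hyy addn1 leqnn.
have -> : conjp k x + false = conjp k x by rewrite addn0.
rewrite -partK //.
case: (eqVneq y y0) => [->|hyy]; last by rewrite addn0.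
rewrite addn1 leq_eqVlt ltnS.
by rewrite (negbTE hxe).
Qed.

Section OCprops.
Variables (k r : seq nat) (e : nat * nat).
Hypothesis H : OC k r e.

Lemma OC_e1 : 0 < e.1. Proof. by rewrite (OC1 H). Qed.
Lemma OC_e2 : 0 < e.2. Proof. by rewrite (OC2 H). Qed.

Lemma OC_notin : e \notin cells k.
Proof. by rewrite mem_cells (OC1 H) ltnn andbF. Qed.

Lemma OC_mem c : (c \in cells r) = (c == e) || (c \in cells k).
Proof.
case: c => x y; rewrite !mem_cells /=.
case hy: (0 < y); rewrite ?andbF ?orbF; last first.
  by apply/esym/negbTE; case: e OC_e2 => a b /= hb; apply/negP => /eqP[_ hyb]; move: hy; rewrite hyb hb.
rewrite !andbT (OCp H) //.
case: (eqVneq y e.2) => [hye|hye]; last first.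
  rewrite addn0 (_ : ((x, y) == e) = false) //; apply/negbTE; case: e hye => a b /= hb.
  by apply/negP => /eqP[_ hyb]; move: hb; rewrite hyb eqxx.
rewrite addn1 [x <= _.+1]leq_eqVlt ltnS.
rewrite (_ : ((x, y) == e) = (x == e.1)); last first.
  by case: e hye => a b /= ->; rewrite xpair_eqE eqxx andbT.
rewrite hye -(OC1 H).
case hx: (0 < x) => /=; first by [].
by apply/esym/negbTE; rewrite ?orbF; apply/negP => /eqP hxe; move: hx; rewrite hxe OC_e1.
Qed.

Lemma OC_cells : perm_eq (cells r) (e :: cells k).
Proof.
apply: uniq_perm; rewrite ?cells_uniq //= ?cells_uniq ?andbT; first exact: OC_notin.
by move=> c; rewrite OC_mem inE.
Qed.

Lemma OC_skew : Defs.skew r k =i [:: e].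
Proof.
move=> c; rewrite /Defs.skew mem_filter OC_mem inE.
case: (eqVneq c e) => [->|]; first by rewrite OC_notin.
by move=> hce; case: (c \in cells k).
Qed.

Lemma OC_R : Rset r k = [seq c <- cells k | c.2 == e.2].
Proof.
rewrite /Rset; apply: eq_filter => c; rewrite (eq_has_r OC_skew) /= orbF.
by rewrite eq_sym.
Qed.

Lemma OC_C : Cset r k = [seq c <- cells k | c.1 == e.1].
Proof.
rewrite /Cset; apply: eq_filter => c; rewrite (eq_has_r OC_skew) /= orbF.
by rewrite eq_sym.
Qed.

End OCprops.

Section OCsums.
Local Open Scope ring_scope.
Variables (k r : seq nat) (e : nat * nat).
Hypothesis H : OC k r e.

Lemma OC_arm c : (0 < c.2)%N -> arm r c = arm k c + (c.2 == e.2)%:Z.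
Proof. by move=> h; rewrite /arm (OCp H) // PoszD addrAC. Qed.

Lemma OC_leg c : (0 < c.1)%N -> leg r c = leg k c + (c.1 == e.1)%:Z.
Proof. by move=> h; rewrite /leg (OCc H) // PoszD addrAC. Qed.

Lemma cells_pos l c : c \in cells l -> (0 < c.1)%N /\ (0 < c.2)%N.
Proof. by rewrite mem_cells => /and3P[]. Qed.

Lemma OC_narm : narm r - narm k = \sum_(c <- Rset r k) 1.
Proof.
rewrite /narm (perm_big _ (OC_cells H)) big_cons /=.
have -> : arm r e = 0.
  by rewrite /arm (OCp H) ?(OC_e2 H) // eqxx (OC1 H) addn1 subrr.
rewrite add0r (OC_R H) big_filter big_mkcond.
rewrite (eq_big_seq (fun c => arm k c + (c.2 == e.2)%:Z)); last first.
  by move=> c /cells_pos[_ h]; rewrite OC_arm.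
rewrite big_split /= addrAC subrr add0r [RHS]big_mkcond; apply: eq_bigr => c _.
by case: (c.2 == e.2).
Qed.

Lemma OC_nleg : nleg r - nleg k = \sum_(c <- Cset r k) 1.
Proof.
rewrite /nleg (perm_big _ (OC_cells H)) big_cons /=.
have -> : leg r e = 0.
  by rewrite /leg (OCc H) ?(OC_e1 H) // eqxx (OC2 H) addn1 subrr.
rewrite add0r (OC_C H) big_filter big_mkcond.
rewrite (eq_big_seq (fun c => leg k c + (c.1 == e.1)%:Z)); last first.
  by move=> c /cells_pos[h _]; rewrite OC_leg.
rewrite big_split /= addrAC subrr add0r [RHS]big_mkcond; apply: eq_bigr => c _.
by case: (c.1 == e.1).
Qed.

End OCsums.

Lemma OC_conj k r e : OC k r e -> OC (conj_part k) (conj_part r) (swap e).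
Proof.
move=> H; have Hk := OCk H; have Hr := OCr H.
split; rewrite ?conj_partition //=.
- by move=> y hy; rewrite !part_conj // (OCc H).
- by move=> x hx; rewrite !conjp_conj // (OCp H).
- by rewrite part_conj ?(OC_e1 H) // (OC2 H).
- by rewrite conjp_conj ?(OC_e2 H) // (OC1 H).
Qed.

Lemma conj_R k r e : OC k r e ->
  perm_eq (Rset (conj_part r) (conj_part k)) (map swap (Cset r k)).
Proof.
move=> H; rewrite (OC_R (OC_conj H)) (OC_C H).
apply: (perm_trans (perm_filter _ (cells_conj (OCk H)))).
by rewrite filter_map (@eq_filter _ _ (fun c => c.1 == e.1)).
Qed.

Lemma conj_C k r e : OC k r e ->
  perm_eq (Cset (conj_part r) (conj_part k)) (map swap (Rset r k)).
Proof.
move=> H; rewrite (OC_C (OC_conj H)) (OC_R H).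
apply: (perm_trans (perm_filter _ (cells_conj (OCk H)))).
by rewrite filter_map (@eq_filter _ _ (fun c => c.2 == e.2)).
Qed.

Lemma arm_conj l c : is_partition l -> (0 < c.1)%N -> arm (conj_part l) (swap c) = leg l c.
Proof. by move=> Hl h; rewrite /arm /leg /= part_conj. Qed.

Lemma leg_conj l c : is_partition l -> (0 < c.2)%N -> leg (conj_part l) (swap c) = arm l c.
Proof. by move=> Hl h; rewrite /arm /leg /= conjp_conj. Qed.

Lemma narm_conj l : is_partition l -> narm (conj_part l) = nleg l.
Proof.
move=> Hl; rewrite /narm /nleg (perm_big _ (cells_conj Hl)) big_map.
by apply: eq_big_seq => c /cells_pos[h _]; rewrite arm_conj.
Qed.

Lemma nleg_conj l : is_partition l -> nleg (conj_part l) = narm l.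
Proof.
move=> Hl; rewrite /narm /nleg (perm_big _ (cells_conj Hl)) big_map.
by apply: eq_big_seq => c /cells_pos[_ h]; rewrite leg_conj.
Qed.

End MB.
Import MB.

Module MC.
Set Implicit Arguments. Unset Strict Implicit. Unset Printing Implicit Defensive.
Import Order.TTheory GRing.Theory Num.Theory.
Local Open Scope ring_scope.

Section Alg.
Variables (F : fieldType) (q t : F).
Hypotheses (hq : q != 0) (ht : t != 0).

Lemma br_inv i j : br q^-1 t^-1 i j = - br t q j i * (q ^ i * t ^ j)^-1.
Proof.
rewrite /br !exprz_inv -!invr_expz.
have h1 : q ^ i != 0 by rewrite expfz_neq0.
have h2 : t ^ j != 0 by rewrite expfz_neq0.
by field; rewrite ?h1 ?h2.
Qed.

Lemma br_ratio a1 b1 a2 b2 :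
  br q^-1 t^-1 b1 a1 / br q^-1 t^-1 b2 a2
  = br t q a1 b1 / br t q a2 b2 * (q ^ (b2 - b1) * t ^ (a2 - a1)).
Proof.
rewrite !br_inv !expfzDr // -!invr_expz.
have h1 : q ^ b1 != 0 by rewrite expfz_neq0.
have h2 : t ^ a1 != 0 by rewrite expfz_neq0.
have h3 : q ^ b2 != 0 by rewrite expfz_neq0.
have h4 : t ^ a2 != 0 by rewrite expfz_neq0.
have [->|h5] := eqVneq (br t q a2 b2) 0; first by rewrite !(mulr0, oppr0, mul0r, invr0).
by field; rewrite ?oppr_eq0 ?h1 ?h2 ?h3 ?h4 ?h5.
Qed.

End Alg.

Lemma sum1_size (T : Type) (s : seq T) : \sum_(c <- s) (1 : int) = (size s)%:Z.
Proof. by elim: s => [|a s IH]; rewrite ?big_nil ?big_cons // IH /= -addn1 PoszD addrC. Qed.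

Lemma prod_const_seq (R : fieldType) (T : Type) (s : seq T) (x : R) :
  \prod_(c <- s) x = x ^ (\sum_(c <- s) (1 : int)).
Proof.
rewrite sum1_size /=; elim: s => [|a s IH]; rewrite ?big_nil ?big_cons ?expr0z //.
by rewrite IH /= exprSz.
Qed.

Section AlphaConj.
Variables (F : fieldType) (q t : F).
Hypotheses (hq : q != 0) (ht : t != 0).
Variables (k r : seq nat) (e : nat * nat).
Hypothesis H : OC k r e.

Lemma qt_exp (a b : int) : a = 1 -> b = 0 -> q ^ a * t ^ b = q.
Proof. by move=> -> ->; rewrite expr0z mulr1 expr1z. Qed.
Lemma tq_exp (a b : int) : a = 0 -> b = 1 -> q ^ a * t ^ b = t.
Proof. by move=> -> ->; rewrite expr0z mul1r expr1z. Qed.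

Lemma inC c : c \in Cset r k -> [/\ c \in cells k, c \in cells r, c.1 = e.1 & c.2 != e.2].
Proof.
rewrite (OC_C H) mem_filter => /andP[/eqP h1 hc]; split => //.
  by rewrite (OC_mem H) hc orbT.
apply/negP => /eqP h2; move: (OC_notin H).
by rewrite (_ : e = c) ?hc //; case: e c h1 h2 {hc} => a b [x y] /= -> ->.
Qed.

Lemma inR c : c \in Rset r k -> [/\ c \in cells k, c \in cells r, c.2 = e.2 & c.1 != e.1].
Proof.
rewrite (OC_R H) mem_filter => /andP[/eqP h1 hc]; split => //.
  by rewrite (OC_mem H) hc orbT.
apply/negP => /eqP h2; move: (OC_notin H).
by rewrite (_ : e = c) ?hc //; case: e c h1 h2 {hc} => a b [x y] /= -> ->.
Qed.

Lemma alpha_conj :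
  alpha q^-1 t^-1 (conj_part r) (conj_part k)
  = alpha t q r k * (q ^ (nleg r - nleg k) * t ^ (narm r - narm k)).
Proof.
have Hk := OCk H; have Hr := OCr H.
rewrite /alpha (perm_big _ (conj_R H)) (perm_big _ (conj_C H)) !big_map.
rewrite (eq_big_seq (fun c => (br t q (arm k c + 1) (leg k c) / br t q (arm r c + 1) (leg r c)) * q)); last first.
  move=> c /inC[hk hr h1 h2].
  have [p1 p2] := cells_pos hk.
  rewrite !arm_conj ?leg_conj // br_ratio // (OC_leg H) // (OC_arm H) // h1 eqxx (negbTE h2).
  by congr (_ * _); apply: qt_exp; lia.
rewrite [X in _ * X](eq_big_seq (fun c => (br t q (arm k c) (leg k c + 1) / br t q (arm r c) (leg r c + 1)) * t)); last first.
  move=> c /inR[hk hr h1 h2].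
  have [p1 p2] := cells_pos hk.
  rewrite !arm_conj ?leg_conj // br_ratio // (OC_leg H) // (OC_arm H) // h1 eqxx (negbTE h2).
  by congr (_ * _); apply: tq_exp; lia.
rewrite !big_split /= !prod_const_seq -(OC_nleg H) -(OC_narm H).
by rewrite mulrC; ring.
Qed.

Lemma alphabar_conj :
  alphabar q^-1 t^-1 (conj_part r) (conj_part k)
  = alphabar t q r k * (q ^ (nleg r - nleg k) * t ^ (narm r - narm k)).
Proof.
have Hk := OCk H; have Hr := OCr H.
rewrite /alphabar (perm_big _ (conj_R H)) (perm_big _ (conj_C H)) !big_map.
rewrite (eq_big_seq (fun c => (br t q (arm k c) (leg k c + 1) / br t q (arm r c) (leg r c + 1)) * q)); last first.
  move=> c /inC[hk hr h1 h2].
  have [p1 p2] := cells_pos hk.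
  rewrite !arm_conj ?leg_conj // br_ratio // (OC_leg H) // (OC_arm H) // h1 eqxx (negbTE h2).
  by congr (_ * _); apply: qt_exp; lia.
rewrite [X in _ * X](eq_big_seq (fun c => (br t q (arm k c + 1) (leg k c) / br t q (arm r c + 1) (leg r c)) * t)); last first.
  move=> c /inR[hk hr h1 h2].
  have [p1 p2] := cells_pos hk.
  rewrite !arm_conj ?leg_conj // br_ratio // (OC_leg H) // (OC_arm H) // h1 eqxx (negbTE h2).
  by congr (_ * _); apply: tq_exp; lia.
rewrite !big_split /= !prod_const_seq -(OC_nleg H) -(OC_narm H).
by rewrite mulrC; ring.
Qed.

End AlphaConj.

End MC.
Import MC.

Module MD.
Set Implicit Arguments. Unset Strict Implicit. Unset Printing Implicit Defensive.
Import Order.TTheory GRing.Theory Num.Theory.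
Local Open Scope ring_scope.

Section PAlg.
Variables (F : fieldType) (q t : F).
Hypotheses (hq : q != 0) (ht : t != 0) (hq1 : q != 1) (ht1 : t != 1).

Definition Gm (A B : int) : F :=
  ((1 - t ^ A * q ^ B) * (1 - t ^ (A + 1) * q ^ (B - 1))) / ((1 - t) * (1 - q)).
Definition Gm' (A B : int) : F :=
  ((1 - q^-1 ^ A * t^-1 ^ B) * (1 - q^-1 ^ (A + 1) * t^-1 ^ (B - 1))) / ((1 - q^-1) * (1 - t^-1)).

Lemma Gm_rel (x1 x2 y1 y2 : int) :
  Gm' (x2 - x1) (y1 - y2) = Gm (y2 - y1) (x1 - x2) * (q * t).
Proof.
rewrite /Gm /Gm' !exprz_inv.
have -> : - (x2 - x1) = x1 - x2 by ring.
have -> : - (y1 - y2) = y2 - y1 by ring.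
have -> : - (x2 - x1 + 1) = x1 - x2 - 1 by ring.
have -> : - (y1 - y2 - 1) = y2 - y1 + 1 by ring.
rewrite [q ^ (x1 - x2) * _]mulrC [q ^ (x1 - x2 - 1) * _]mulrC.
set N := (1 - t ^ (y2 - y1) * q ^ (x1 - x2)) * (1 - t ^ (y2 - y1 + 1) * q ^ (x1 - x2 - 1)).
clearbody N.
have h1 : 1 - q != 0 by rewrite subr_eq0 eq_sym.
have h2 : 1 - t != 0 by rewrite subr_eq0 eq_sym.
by field; rewrite ?h1 ?h2 ?hq ?ht ?subr_eq0 ?hq1 ?ht1.
Qed.

Lemma P1_alg (x1 x2 y1 y2 : int) (a b : F) :
  t^-1 ^ ((y1 - y2) - 1) * (a * (q ^ x1 * t ^ y1)) * (b * (q ^ x2 * t ^ y2))^-1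
    / Gm' (x2 - x1) (y1 - y2)
  = q ^ ((x1 - x2) - 1) * a * b^-1 / Gm (y2 - y1) (x1 - x2).
Proof.
rewrite Gm_rel [(Gm _ _ * _)^-1]invfM; move: (Gm _ _)^-1 => gi.
rewrite [(b * _)^-1]invfM; move: b^-1 => bi.
rewrite exprz_inv -invr_expz !expfzDr // -!invr_expz ?expr1z.
have h1 : q ^ x1 != 0 by rewrite expfz_neq0.
have h2 : q ^ x2 != 0 by rewrite expfz_neq0.
have h3 : t ^ y1 != 0 by rewrite expfz_neq0.
have h4 : t ^ y2 != 0 by rewrite expfz_neq0.
by field; rewrite ?h1 ?h2 ?h3 ?h4 ?hq ?ht.
Qed.

End PAlg.

Section PConj.
Variables (F : fieldType) (q t : F).
Hypotheses (hq : q != 0) (ht : t != 0) (hq1 : q != 1) (ht1 : t != 1).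

Lemma P0_conj lam nu e : OC lam nu e ->
  P0 q^-1 t^-1 (conj_part lam) (conj_part nu) = P0 t q lam nu.
Proof.
move=> H; rewrite /P0 (alpha_conj hq ht H) !nleg_conj ?(OCk H) ?(OCr H) //.
rewrite exprz_inv -invr_expz.
have h : t ^ (narm nu - narm lam) != 0 by rewrite expfz_neq0.
by field.
Qed.

Lemma Pbar0_conj lam nu e : OC lam nu e ->
  Pbar0 q^-1 t^-1 (conj_part lam) (conj_part nu) = Pbar0 t q lam nu.
Proof.
move=> H; rewrite /Pbar0 (alphabar_conj hq ht H) !nleg_conj ?(OCk H) ?(OCr H) //.
rewrite exprz_inv -invr_expz.
have h : t ^ (narm nu - narm lam) != 0 by rewrite expfz_neq0.
by field.
Qed.

Lemma P1_conj mu lam nu f e : OC mu lam f -> OC lam nu e ->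
  P1 q^-1 t^-1 (conj_part lam) (conj_part mu) (conj_part nu) = P1 t q lam mu nu.
Proof.
move=> H1 H2.
have Hm := OCk H1; have Hl := OCr H1; have Hn := OCr H2.
rewrite /P1 /Pbar1.
have -> : gamma q^-1 t^-1 (conj_part nu) (conj_part lam) (conj_part mu)
  = Gm' q t ((nleg lam - nleg mu) - (nleg nu - nleg lam)) ((narm nu - narm lam) - (narm lam - narm mu)).
  by rewrite /gamma /Aexp /Bexp !narm_conj // !nleg_conj.
rewrite /P1 /beta /Bexp !nleg_conj // (alpha_conj hq ht H2) (alpha_conj hq ht H1).
rewrite (P1_alg hq ht hq1 ht1).
by [].
Qed.

Lemma Pbar1_conj mu lam nu f e : OC mu lam f -> OC lam nu e ->
  Pbar1 q^-1 t^-1 (conj_part lam) (conj_part mu) (conj_part nu) = Pbar1 t q lam mu nu.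
Proof.
move=> H1 H2.
have Hm := OCk H1; have Hl := OCr H1; have Hn := OCr H2.
rewrite /P1 /Pbar1.
have -> : gamma q^-1 t^-1 (conj_part nu) (conj_part lam) (conj_part mu)
  = Gm' q t ((nleg lam - nleg mu) - (nleg nu - nleg lam)) ((narm nu - narm lam) - (narm lam - narm mu)).
  by rewrite /gamma /Aexp /Bexp !narm_conj // !nleg_conj.
rewrite /Pbar1 /betabar /Bexp !nleg_conj // (alphabar_conj hq ht H2) (alphabar_conj hq ht H1).
rewrite (P1_alg hq ht hq1 ht1).
by [].
Qed.

End PConj.

End MD.
Import MD.

Module ME.
Set Implicit Arguments. Unset Strict Implicit. Unset Printing Implicit Defensive.
Import Order.TTheory GRing.Theory Num.Theory.

Definition uu l k := nth 0 (dparts l) k.-1.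

Lemma vsumE l k : 0 < k -> vsum l k = conjp l (uu l k).
Proof. by case: k. Qed.

Section Corners.
Variable l : seq nat.
Hypothesis Hp : is_partition l.
Local Notation d := (ndist l).

Lemma dparts_sorted : sorted (fun a b => b < a) (dparts l).
Proof.
have Hs : sorted geq (dparts l).
  by apply: (subseq_sorted geq_trans (undup_subseq l)); case/andP: Hp.
have Hu : uniq (dparts l) := undup_uniq l.
rewrite -(revK (dparts l)) rev_sorted.
have : sorted ltn (rev (dparts l)) by rewrite ltn_sorted_uniq_leq rev_uniq Hu rev_sorted.
by [].
Qed.

Lemma uu_strict i j : 0 < i -> i < j -> j <= d -> uu l j < uu l i.
Proof.
move=> hi hij hj; rewrite /uu.
have tr : transitive (fun a b : nat => b < a) by move=> y x z h1 h2; exact: ltn_trans h2 h1.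
have := sorted_ltn_nth tr 0 dparts_sorted.
apply; rewrite ?inE /ndist in hj *; try lia.
Qed.

Lemma uu_anti i j : 0 < i -> i <= j -> uu l j <= uu l i.
Proof.
move=> hi hij; case: (leqP j d) => hj; last first.
  by rewrite /uu nth_default //; rewrite /ndist in hj; lia.
case: (ltngtP i j) hij => // [h|->] _; last by [].
by apply: ltnW; apply: uu_strict.
Qed.

Lemma uu_in k : 0 < k -> k <= d -> uu l k \in l.
Proof. by move=> h1 h2; rewrite -mem_undup; apply: mem_nth; rewrite prednK. Qed.

Lemma uu_pos k : 0 < k -> k <= d -> 0 < uu l k.
Proof. by move=> h1 h2; have := uu_in h1 h2; case/andP: Hp => _ /allP; apply. Qed.

Lemma in_uu p : p \in l -> exists2 k, (0 < k <= d) & p = uu l k.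
Proof.
rewrite -mem_undup => /(nthP 0)[i hi <-]; exists i.+1 => //.
Qed.

Lemma uu_gap k p : 0 < k -> k <= d -> p \in l -> (uu l k.+1 < p) = (uu l k <= p).
Proof.
move=> hk hkd /in_uu[j /andP[hj hjd] ->].
case: (leqP j k) => hjk.
  have h1 := uu_anti hj hjk.
  have h2 : uu l k.+1 < uu l k.
    case: (ltnP k d) => hkd'; first by apply: uu_strict.
    by rewrite /uu nth_default ?uu_pos //; rewrite /ndist in hkd' *; lia.
  by rewrite h1 (leq_trans h2 h1).
have h1 : uu l j <= uu l k.+1 by apply: uu_anti.
have h2 : uu l k.+1 < uu l k.
  case: (ltnP k d) => hkd'; first by apply: uu_strict.
  by rewrite /uu nth_default ?uu_pos //; rewrite /ndist in hkd' *; lia.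
by rewrite ltnNge h1 leqNgt (leq_ltn_trans h1 h2).
Qed.

Lemma conjp_S a : conjp l a = conjp l a.+1 + count (pred1 a) l.
Proof.
rewrite /conjp; elim: l => [|b s IH] //=; rewrite IH.
have E : ((a <= b) : nat) = ((a < b) : nat) + ((b == a) : nat) by case: ltngtP.
rewrite E /=; lia.
Qed.

Lemma conjp_anti a b : a <= b -> conjp l b <= conjp l a.
Proof. by move=> h; apply: sub_count => p /= hp; apply: leq_trans hp. Qed.

Lemma conjp_in_lt a : a \in l -> conjp l a.+1 < conjp l a.
Proof.
move=> ha; rewrite [conjp l a]conjp_S -[X in X < _]addn0 ltn_add2l.
by rewrite -has_count; apply/hasP; exists a => //=.
Qed.

Lemma uu1_max p : p \in l -> p <= uu l 1.
Proof.
move=> /in_uu[j /andP[hj _] ->]; exact: uu_anti.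
Qed.

Lemma V2 k : k <= d -> conjp l (uu l k.+1).+1 = vsum l k.
Proof.
case: k => [|k] hk /=.
  apply/eqP; rewrite -leqn0 leqNgt -has_count; apply/hasP => -[p hp].
  by rewrite /= ltnNge uu1_max.
apply: eq_in_count => p hp /=; exact: uu_gap.
Qed.

Lemma vsum_le_size k : vsum l k <= size l.
Proof. by case: k => // k; apply: count_size. Qed.

Lemma V3 k : k <= d -> part l (vsum l k).+1 = uu l k.+1.
Proof.
move=> hk; apply: eq_by_le => x hx; rewrite partK //.
case: (leqP x (uu l k.+1)) => hxu.
  case: (ltnP k d) => hkd.
    have h1 := conjp_anti hxu.
    have h2 := conjp_in_lt (uu_in (ltn0Sn k) hkd).
    rewrite V2 // in h2; exact: leq_trans h2 h1.
  by move: hxu; rewrite /uu nth_default //; rewrite /ndist in hkd; lia.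
apply/negbTE; rewrite -ltnNge ltnS -(V2 hk); exact: conjp_anti.
Qed.

Lemma vsum_pos k : 0 < k -> k <= d -> 0 < vsum l k.
Proof.
move=> h1 h2; rewrite vsumE // -has_count; apply/hasP; exists (uu l k) => //.
exact: uu_in.
Qed.

Lemma V4 k : 0 < k -> k <= d -> part l (vsum l k) = uu l k.
Proof.
move=> hk hkd; apply: eq_by_le => x hx; rewrite partK ?vsum_pos // vsumE //.
case: (leqP x (uu l k)) => hxu; first by rewrite conjp_anti.
apply/negbTE; rewrite -ltnNge.
have h := conjp_in_lt (uu_in hk hkd).
exact: leq_ltn_trans (conjp_anti hxu) h.
Qed.

Lemma V6 k : 0 < k -> k <= d -> vsum l k.-1 < vsum l k.
Proof.
move=> hk hkd; rewrite -V2; last by lia.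
rewrite prednK // vsumE //; apply: conjp_in_lt; exact: uu_in.
Qed.

End Corners.

Lemma part_partition a : (forall y, 0 < y -> part a y.+1 <= part a y) ->
  (forall y, 0 < y -> y <= size a -> 0 < part a y) -> is_partition a.
Proof.
move=> H1 H2; apply/andP; split.
  by apply/(sortedP 0) => i hi; apply: (H1 i.+1).
by apply/(all_nthP 0) => i hi; apply: (H2 i.+1).
Qed.

Lemma part_pos l y : is_partition l -> 0 < y -> y <= size l -> 0 < part l y.
Proof.
case/andP=> _ /(all_nthP 0) H hy hys; apply: H.
by rewrite prednK.
Qed.

Lemma part_size l y : size l < y -> part l y = 0.
Proof. by move=> h; rewrite /part nth_default //; lia. Qed.

Lemma lplus_part l s y : 0 < y -> part (lplus l s) y = part l y + (y == (vsum l s).+1).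
Proof.
move=> hy; rewrite /lplus /add_cell /part /= nth_incr_nth addnC.
by case: y hy => // y _ /=; rewrite eqSS eq_sym.
Qed.

Section LPM.
Variable l : seq nat.
Hypothesis Hp : is_partition l.
Local Notation d := (ndist l).

Lemma uu_succ_lt k : 0 < k -> k <= d -> uu l k.+1 < uu l k.
Proof.
move=> hk hkd; case: (ltnP k d) => h; first exact: uu_strict.
by rewrite /uu nth_default ?uu_pos // /=; move: h; rewrite /ndist.
Qed.

Lemma vsum0 : vsum l 0 = 0. Proof. by []. Qed.

Lemma lplus_partition s : s <= d -> is_partition (lplus l s).
Proof.
move=> hs; apply: part_partition.
  move=> y hy; rewrite !lplus_part //.
  rewrite eqSS.
  case: (eqVneq y (vsum l s)) => [hyv|hne].
    have hs0 : 0 < s by case: s hs hyv => // _ h; move: hy; rewrite h.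
    rewrite hyv (_ : (vsum l s == (vsum l s).+1) = false); last by rewrite eqn_leq ltnn andbF.
    rewrite V3 // V4 // addn0 addn1; exact: uu_succ_lt.
  rewrite addn0; apply: leq_trans (leq_addr _ _).
  by apply: part_anti.
move=> y hy; rewrite /lplus /add_cell /= size_incr_nth lplus_part //.
case: ifP => hv hys.
  by apply: leq_trans (leq_addr _ _); apply: part_pos.
case: (leqP y (size l)) => hyl; first by apply: leq_trans (leq_addr _ _); apply: part_pos.
have hv2 := vsum_le_size l s.
have -> : y = (vsum l s).+1 by move/negbT: hv; rewrite -leqNgt => hv; lia.
by rewrite eqxx addn1.
Qed.

Lemma OC_lplus s : s <= d -> OC l (lplus l s) ((part l (vsum l s).+1).+1, (vsum l s).+1).
Proof.
move=> hs; apply: OC_of_parts => //; first exact: lplus_partition.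
exact: lplus_part.
Qed.

End LPM.

Lemma filter_pos_nth s i : sorted geq s -> nth 0 [seq p <- s | 0 < p] i = nth 0 s i.
Proof.
elim: s i => [|a s IH] i //= Hs.
have Hs' := path_sorted Hs.
have /allP Hm := order_path_min geq_trans Hs.
case: a Hs Hm => [|a] Hs Hm /=; last by case: i => //= i; rewrite IH.
have -> : [seq p <- s | 0 < p] = [::].
  rewrite (@eq_in_filter _ _ pred0) ?filter_pred0 // => p /Hm /=.
  by rewrite leqn0 => /eqP ->.
case: i => [|i] //=.
case: (ltnP i (size s)) => h; last by rewrite nth_default.
by have := Hm _ (mem_nth 0 h); rewrite /= leqn0 => /eqP.
Qed.

Section LM.
Variable l : seq nat.
Hypothesis Hp : is_partition l.
Local Notation d := (ndist l).

Definition s1 r := set_nth 0 l (vsum l r).-1 (nth 0 l (vsum l r).-1).-1.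

Lemma s1_sorted r : 0 < r -> r <= d -> sorted geq (s1 r).
Proof.
move=> hr hrd; have hV := vsum_pos hr hrd.
apply/(sortedP 0) => i hi; rewrite /s1 !nth_set_nth /=.
have hV4 := V4 Hp hr hrd; have hV3 := V3 Hp hrd.
have hlt := uu_succ_lt Hp hr hrd.
rewrite /part in hV4 hV3.
case: (eqVneq i.+1 (vsum l r).-1) => h1.
  rewrite (_ : (i == (vsum l r).-1) = false); last by apply/negbTE; rewrite -h1 neq_ltn ltnSn.
  have := part_anti Hp (ltn0Sn i) (_ : i.+1 <= vsum l r); rewrite /part /= => h2.
  by rewrite -subn1 leq_subLR; apply: leq_trans (h2 _) (leq_addl _ _); lia.
case: (eqVneq i (vsum l r).-1) => h2.
  rewrite h2 prednK // hV3 hV4 -subn1 leq_subRL ?addn1 //.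
  by apply: leq_ltn_trans (leq0n _) hlt.
have := part_anti Hp (ltn0Sn i) (ltnW (ltnSn i.+1)); by rewrite /part.
Qed.

Lemma lminus_part r y : 0 < r -> r <= d -> 0 < y ->
  part (lminus l r) y = part l y - (y == vsum l r).
Proof.
move=> hr hrd hy; have hV := vsum_pos hr hrd.
case: r hr hrd hV => // r _ hrd hV.
rewrite /lminus /rem_cell /part filter_pos_nth; last exact: (s1_sorted (ltn0Sn r) hrd).
rewrite nth_set_nth /=.
case: (eqVneq y (vsum l r.+1)) => [->|hne].
  by rewrite eqxx subn1.
rewrite (_ : (y.-1 == (vsum l r.+1).-1) = false) ?subn0 //.
by apply/negbTE; apply: contra hne => /eqP h; apply/eqP; lia.
Qed.

Lemma lminus_partition r : 0 < r -> r <= d -> is_partition (lminus l r).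
Proof.
case: r => // r _ hrd; apply/andP; split.
  by apply: sorted_filter; [exact: geq_trans | exact: (s1_sorted (ltn0Sn r) hrd)].
by apply: filter_all.
Qed.

Lemma OC_lminus r : 0 < r -> r <= d ->
  OC (lminus l r) l (part l (vsum l r), vsum l r).
Proof.
move=> hr hrd; have hV := vsum_pos hr hrd.
have hpos : 0 < part l (vsum l r) by rewrite V4 // uu_pos.
have := @OC_of_parts (lminus l r) l (vsum l r) (lminus_partition hr hrd) Hp hV.
rewrite lminus_part // eqxx subn1 prednK //; apply => y hy.
rewrite lminus_part //; case: (eqVneq y (vsum l r)) => [->|_]; rewrite ?subn0 ?addn0 //.
by rewrite subn1 addn1 prednK.
Qed.

End LM.

End ME.
Import ME.

Module MF.
Set Implicit Arguments. Unset Strict Implicit. Unset Printing Implicit Defensive.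
Import Order.TTheory GRing.Theory Num.Theory.

Section ConjData.
Variable l : seq nat.
Hypothesis Hp : is_partition l.
Local Notation d := (ndist l).

Lemma part1_head : part l 1 = head 0 l. Proof. by case: l. Qed.

Lemma uu1_head : uu l 1 = head 0 l.
Proof. by rewrite -part1_head -(V3 Hp (k := 0)). Qed.

Lemma conj_mem v : (v \in conj_part l) = (v \in map (vsum l) (iota 1 d)).
Proof.
apply/idP/idP.
  rewrite /conj_part /mkseq => /mapP[i]; rewrite mem_iota add0n => /andP[_ hi] ->.
  set x := i.+1.
  have hd : 0 < d.
    rewrite /ndist /dparts; case E: l hi => [|a l0] // _.
    have : a \in undup (a :: l0) by rewrite mem_undup mem_head.
    by case: (undup (a :: l0)).
  pose P k := (0 < k <= d) && (x <= uu l k).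
  have exP : exists k, P k by exists 1; rewrite /P hd uu1_head.
  have ubP : forall k, P k -> k <= d by move=> k /andP[/andP[]].
  case: (ex_maxnP exP ubP) => k /andP[/andP[hk hkd] hxk] hmax.
  apply/mapP; exists k; first by rewrite mem_iota; lia.
  apply/eqP; rewrite eqn_leq; apply/andP; split.
    rewrite -V2 //; apply: conjp_anti.
    case: (ltnP k d) => hkd'.
      by rewrite ltnNge; apply/negP => h; have := hmax k.+1; rewrite /P h hkd' /= => /(_ isT); rewrite ltnn.
    by rewrite /uu nth_default //; move: hkd'; rewrite /ndist.
  by rewrite vsumE //; apply: conjp_anti.
move=> /mapP[k]; rewrite mem_iota => /andP[hk hkd] ->.
have hk' : 0 < k by [].
have hkd' : k <= d by lia.
rewrite vsumE // /conj_part /mkseq; apply/mapP; exists (uu l k).-1.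
  rewrite mem_iota add0n leq0n /= prednK ?uu_pos // -uu1_head; exact: uu_anti.
by rewrite prednK ?uu_pos.
Qed.

Lemma dparts_conj : dparts (conj_part l) = rev (map (vsum l) (iota 1 d)).
Proof.
have tr : transitive (fun a b : nat => b < a) by move=> y x z h1 h2; exact: ltn_trans h2 h1.
apply: (irr_sorted_eq tr (fun x => ltnn x)).
- exact: dparts_sorted (conj_partition Hp).
- rewrite rev_sorted; apply/(sortedP 0) => i; rewrite size_map size_iota => hi.
  rewrite !(nth_map 0) ?size_iota; try lia.
  rewrite !nth_iota; try lia.
  have h : 1 + i.+1 <= d by lia.
  by have := V6 Hp (isT : 0 < 1 + i.+1) h.
- by move=> v; rewrite mem_undup mem_rev conj_mem.
Qed.

Lemma ndist_conj : ndist (conj_part l) = d.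
Proof. by rewrite /ndist dparts_conj size_rev size_map size_iota. Qed.

Lemma uu_conj j : 0 < j -> j <= d -> uu (conj_part l) j = vsum l (d.+1 - j).
Proof.
move=> hj hjd; rewrite /uu dparts_conj nth_rev size_map size_iota; last by lia.
rewrite (nth_map 0) ?size_iota; last by lia.
rewrite nth_iota; last by lia.
congr vsum; lia.
Qed.

Lemma vsum_conj j : j <= d -> vsum (conj_part l) j = uu l (d.+1 - j).
Proof.
case: j => [|j] hjd.
  by rewrite subn0 /= /uu /= nth_default.
rewrite vsumE // conjp_conj //; last first.
  by rewrite uu_conj //; apply: vsum_pos; lia.
by rewrite uu_conj // V4 //; lia.
Qed.

Lemma conj_lplus s : s <= d -> conj_part (lplus l s) = lplus (conj_part l) (d - s).
Proof.
move=> hs; have H := OC_lplus Hp hs.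
apply: part_inj.
- exact: conj_partition (lplus_partition Hp hs).
- by apply: lplus_partition; rewrite ?conj_partition // ndist_conj leq_subr.
move=> x hx; rewrite part_conj ?(OCr H) // (OCc H) // lplus_part // part_conj //.
rewrite vsum_conj ?leq_subr // V3 // /=.
by have -> : d.+1 - (d - s) = s.+1 by lia.
Qed.

Lemma conj_lminus r : 0 < r -> r <= d -> conj_part (lminus l r) = lminus (conj_part l) (d.+1 - r).
Proof.
move=> hr hrd; have H := OC_lminus Hp hr hrd.
have hr' : 0 < d.+1 - r by lia.
have hrd' : d.+1 - r <= ndist (conj_part l) by rewrite ndist_conj; lia.
apply: part_inj.
- exact: conj_partition (lminus_partition Hp hr hrd).
- by apply: lminus_partition; rewrite ?conj_partition.
move=> x hx; rewrite part_conj ?(OCk H) // lminus_part ?conj_partition // part_conj //.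
rewrite (OCc H) // vsum_conj; last by rewrite ndist_conj in hrd'.
rewrite /= V4 //.
have -> : d.+1 - (d.+1 - r) = r by lia.
by rewrite addnK.
Qed.

End ConjData.

End MF.
Import MF.

Module MG.
Set Implicit Arguments. Unset Strict Implicit. Unset Printing Implicit Defensive.
Import Order.TTheory GRing.Theory Num.Theory.

Section Main.
Local Open Scope ring_scope.
Variables (Fd : fieldType) (q t : Fd).
Hypotheses (hq : q != 0) (ht : t != 0) (hq1 : q != 1) (ht1 : t != 1).

Lemma main_gen (l : seq nat) (r s : nat) :
  is_partition l -> (r <= ndist l)%N -> (s <= ndist l)%N ->
  prs t q l r s = prs q^-1 t^-1 (conj_part l) (((ndist l).+1 - r) %% (ndist l).+1) (ndist l - s)
  /\ pbarrs t q l r s = pbarrs q^-1 t^-1 (conj_part l) (((ndist l).+1 - r) %% (ndist l).+1) (ndist l - s).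
Proof.
move=> Hp hr hs.
have Hl := OC_lplus Hp hs.
case: r hr => [|r] hr.
  rewrite subn0 modnn /prs /pbarrs /= -conj_lplus //.
  by rewrite (P0_conj hq ht Hl) (Pbar0_conj hq ht Hl).
have Hm := OC_lminus Hp (ltn0Sn r) hr.
have -> : (((ndist l).+1 - r.+1) %% (ndist l).+1 = (ndist l - r.+1).+1)%N.
  by rewrite modn_small; lia.
rewrite /prs /pbarrs -subSn // -conj_lminus // -conj_lplus //.
by rewrite (P1_conj hq ht hq1 ht1 Hm Hl) (Pbar1_conj hq ht hq1 ht1 Hm Hl).
Qed.

End Main.
Local Open Scope ring_scope.

Lemma qv_neq0 : qv != 0.
Proof. by rewrite /qv tofrac_eq0 polyC_eq0 polyX_eq0. Qed.
Lemma tv_neq0 : tv != 0.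
Proof. by rewrite /tv tofrac_eq0 polyX_eq0. Qed.
Lemma polyX_neq1 (R : nzRingType) : ('X : {poly R}) != 1.
Proof. by apply/eqP => h; have := size_polyX R; rewrite h size_poly1. Qed.
Lemma qv_neq1 : qv != 1.
Proof. by rewrite /qv -tofrac1 tofrac_eq -polyC1 (inj_eq polyC_inj) polyX_neq1. Qed.
Lemma tv_neq1 : tv != 1.
Proof. by rewrite /tv -tofrac1 tofrac_eq polyX_neq1. Qed.

End MG.
Import MG.

Local Open Scope ring_scope.

Theorem lemma5p2 (l : seq nat) (r s : nat) :
  is_partition l -> (r <= ndist l)%N -> (s <= ndist l)%N ->
  prs tv qv l r s
    = pcol qv tv (conj_part l) (((ndist l).+1 - r) %% (ndist l).+1) (ndist l - s)
  /\ pbarrs tv qv l r s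
    = pbarcol qv tv (conj_part l) (((ndist l).+1 - r) %% (ndist l).+1) (ndist l - s).
Proof.
move=> Hp hr hs.
exact: (main_gen qv_neq0 tv_neq0 qv_neq1 tv_neq1 Hp hr hs).
Qed.
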